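(* Let $d\ge 1$ and $n\ge 0$ be integers, let $N:=\dim \mathbb{C}_n[z]$, where $\mathbb{C}_n[z]$ denotes the space of polynomials in $d$ complex variables of total degree at most $n$, and let $A=\{x_1,\dots,x_N\}\subset\mathbb{C}^d$ be a set of $N$ distinct points that is unisolvent for polynomial interpolation, i.e. for all $y_1,\dots,y_N\in\mathbb{C}$ there is a unique $p\in\mathbb{C}_n[z]$ with $p(x_i)=y_i$ for $1\le i\le N$. Let $z_0\in\mathbb{C}^d\setminus A$, and let $\ell_1,\dots,\ell_N\in\mathbb{C}_n[z]$ be the fundamental Lagrange interpolating polynomials for these points ($\ell_i(x_j)=\delta_{ij}$). Then among all discrete probability measures supported at the points $x_1,\dots,x_N$, the measure $\mu=\sum_{i=1}^N w_i\delta_{x_i}$ with \[ w_i:=\frac{|\ell_i(z_0)|}{\sum_{j=1}^N|\ell_j(z_0)|},\qquad 1\le i\le N, \] minimizes $K_n^\mu(z_0,z_0)$.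
   Context: For a probability measure $\mu$ that is non-degenerate on $\mathbb{C}_n[z]$ (i.e. $\int|p|^2\,d\mu>0$ for every nonzero $p\in\mathbb{C}_n[z]$), $K_n^\mu(z,z):=\sum_{k=1}^N|q_k(z)|^2$, where $\{q_1,\dots,q_N\}$ is a $\mu$-orthonormal basis of $\mathbb{C}_n[z]$ (the reciprocal of the Christoffel function, or Bergman kernel, of $\mu$ on the diagonal). *)

(* Defs.v *)
From HB Require Import structures.
From mathcomp Require Import all_boot all_order all_algebra.
From mathcomp Require Import reals.
From mathcomp Require Import complex.
From mathcomp Require Import mpoly.
Set Implicit Arguments. Unset Strict Implicit. Unset Printing Implicit Defensive.
Import Order.TTheory GRing.Theory Num.Theory.
Local Open Scope ring_scope.

(* C_n[z] : polynomials in d complex variables of total degree <= n.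
   msize p = 1 + total degree of p (0 for p = 0). *)
Definition in_Pn (C : nzRingType) (d n : nat) (p : {mpoly C[d]}) : bool :=
  (msize p <= n.+1)%N.

Section Disc.
Variables (R : realType) (d n N : nat).
Local Notation C := (R[i]).

(* Hermitian form of the discrete measure  sum_i w_i delta_{x_i} :
   <p, q>_mu = int p conj(q) dmu = sum_i w_i p(x_i) conj(q(x_i)). *)
Definition dinner (x : 'I_N -> 'I_d -> C) (w : 'I_N -> C)
    (p q : {mpoly C[d]}) : C :=
  \sum_(i < N) w i * p.@[x i] * (q.@[x i])^*.

Definition disc_prob_weights (w : 'I_N -> C) : Prop :=
  (forall i, 0 <= w i) /\ \sum_(i < N) w i = 1.

Definition disc_nondegenerate (x : 'I_N -> 'I_d -> C) (w : 'I_N -> C) : Prop :=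
  forall p : {mpoly C[d]}, in_Pn n p -> p != 0 -> 0 < dinner x w p p.

Definition disc_orthonormal_basis (M : nat) (x : 'I_N -> 'I_d -> C) (w : 'I_N -> C)
    (q : 'I_M -> {mpoly C[d]}) : Prop :=
  [/\ forall k, in_Pn n (q k),
      forall p, in_Pn n p -> exists c : 'I_M -> C, p = \sum_(k < M) c k *: q k
    & forall k l, dinner x w (q k) (q l) = (k == l)%:R].

(* K_n^mu(z,z) computed from an orthonormal basis q *)
Definition kernel_diag (M : nat) (q : 'I_M -> {mpoly C[d]}) (z : 'I_d -> C) : C :=
  \sum_(k < M) `|(q k).@[z]| ^+ 2.

Definition unisolvent (x : 'I_N -> 'I_d -> C) : Prop :=
  forall y : 'I_N -> C, exists! p : {mpoly C[d]},
    in_Pn n p /\ forall i, p.@[x i] = y i.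
End Disc.

(* Main.v *)
Require Import Defs.
From HB Require Import structures.
From mathcomp Require Import all_boot all_order all_algebra.
From mathcomp Require Import reals.
From mathcomp Require Import complex.
From mathcomp Require Import mpoly.
From mathcomp Require Import ring.
Import Order.TTheory GRing.Theory Num.Theory.
Local Open Scope ring_scope.

Section Aux.
Variables (R : realType) (d n N : nat).
Local Notation C := (R[i]).

Lemma meval_lin M (v : 'I_d -> C) (c : 'I_M -> C) (p : 'I_M -> {mpoly C[d]}) :
  (\sum_(k < M) c k *: p k).@[v] = \sum_(k < M) c k * (p k).@[v].
Proof.
elim/big_rec2: _ => [|k a P _ IH]; first by rewrite meval0.
by rewrite mevalD mevalZ IH.
Qed.

Lemma dinner_suml M (x : 'I_N -> 'I_d -> C) w (c : 'I_M -> C)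
  (p : 'I_M -> {mpoly C[d]}) q :
  dinner x w (\sum_(k < M) c k *: p k) q = \sum_(k < M) c k * dinner x w (p k) q.
Proof.
rewrite /dinner.
under eq_bigr => i _ do rewrite meval_lin mulr_sumr mulr_suml.
rewrite exchange_big; apply: eq_bigr => k _; rewrite mulr_sumr.
by apply: eq_bigr => i _; ring.
Qed.

Lemma delta_sum (F : 'I_N -> C) j : \sum_(i < N) F i * (i == j)%:R = F j.
Proof.
rewrite (bigD1 j) //= eqxx mulr1 big1 ?addr0 // => i /negbTE ->.
by rewrite mulr0.
Qed.

Lemma dinner_ell (x : 'I_N -> 'I_d -> C) w (ell : 'I_N -> {mpoly C[d]}) q i :
  (forall i j, (ell i).@[x j] = (i == j)%:R) ->
  dinner x w (ell i) q = w i * (q.@[x i])^*.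
Proof.
move=> ellx; rewrite /dinner.
rewrite -(delta_sum (fun j => w j * (q.@[x j])^*) i).
by apply: eq_bigr => j _; rewrite ellx eq_sym; ring.
Qed.

Lemma kernel_formula (x : 'I_N -> 'I_d -> C) (ell : 'I_N -> {mpoly C[d]})
  (z : 'I_d -> C) (w : 'I_N -> C) (q : 'I_N -> {mpoly C[d]}) :
  unisolvent n x -> (forall i, in_Pn n (ell i)) ->
  (forall i j, (ell i).@[x j] = (i == j)%:R) ->
  disc_nondegenerate n x w -> disc_orthonormal_basis n x w q ->
  (forall i, 0 < w i) /\
  kernel_diag q z = \sum_(i < N) `|(ell i).@[z]| ^+ 2 / w i.
Proof.
move=> uni ellP ellx nd [qP qB qO].
have wp : forall i, 0 < w i.
  move=> i; have := nd (ell i) (ellP i).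
  rewrite dinner_ell // ellx eqxx conjC1 mulr1; apply.
  apply/eqP => e; have := ellx i i; rewrite e meval0 eqxx => /esym/eqP.
  by rewrite oner_eq0.
split=> //.
have E1 : forall k, q k = \sum_(i < N) (q k).@[x i] *: ell i.
  move=> k; have [p [_ puniq]] := uni (fun i => (q k).@[x i]).
  transitivity p; first by symmetry; apply: puniq; split.
  apply: puniq; split.
    rewrite /in_Pn; apply: leq_trans (msize_sum _ _ _) _.
    apply/bigmax_leqP => i _; exact: leq_trans (msizeZ_le _ _) (ellP i).
  move=> j; rewrite meval_lin.
  under eq_bigr => i _ do rewrite ellx.
  exact: (delta_sum (fun i => (q k).@[x i])).
have E2 : forall i, ell i = \sum_(k < N) (w i * ((q k).@[x i])^*) *: q k.
  move=> i; have [c Hc] := qB (ell i) (ellP i).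
  have Hcl : forall l, c l = w i * ((q l).@[x i])^*.
    move=> l; rewrite -(@dinner_ell x w ell (q l) i ellx) {1}Hc dinner_suml.
    under eq_bigr => k _ do rewrite qO.
    by rewrite delta_sum.
  by rewrite {1}Hc; apply: eq_bigr => k _; rewrite Hcl.
set a := fun i => (ell i).@[z].
set b := fun k => (q k).@[z].
set Q := fun k i => (q k).@[x i].
have Eb : forall k, b k = \sum_(i < N) Q k i * a i.
  by move=> k; rewrite /b {1}E1 meval_lin.
have Ea : forall i, a i = \sum_(k < N) (w i * (Q k i)^*) * b k.
  by move=> i; rewrite /a {1}E2 meval_lin.
rewrite /kernel_diag.
transitivity (\sum_(i < N) (\sum_(k < N) (w i * (Q k i)^*) * b k) * (a i)^* / w i).
  under [RHS]eq_bigr => i _ do rewrite mulr_suml mulr_suml.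
  rewrite exchange_big; apply: eq_bigr => k _.
  rewrite normCK -/(b k) Eb rmorph_sum mulr_sumr; apply: eq_bigr => i _.
  rewrite rmorphM /=.
  have : w i != 0 by rewrite gt_eqF.
  move=> wn0; field; exact: wn0.
by apply: eq_bigr => i _; rewrite normCK -Ea.
Qed.
End Aux.

Theorem mainTheorem1 (R : realType) (d n N : nat)
  (x : 'I_N -> 'I_d -> R[i]) (z0 : 'I_d -> R[i])
  (ell : 'I_N -> {mpoly R[i][d]}) :
  (0 < d)%N ->
  N = 'C(n + d, d) ->
  injective x ->
  unisolvent n x ->
  (forall i, z0 <> x i) ->
  (forall i, in_Pn n (ell i)) ->
  (forall i j, (ell i).@[x j] = (i == j)%:R) ->
  let wstar := fun i : 'I_N => `|(ell i).@[z0]| / \sum_(j < N) `|(ell j).@[z0]| in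
  disc_nondegenerate n x wstar ->
  forall (w : 'I_N -> R[i]), disc_prob_weights w -> disc_nondegenerate n x w ->
  forall (qstar q : 'I_N -> {mpoly R[i][d]}),
    disc_orthonormal_basis n x wstar qstar ->
    disc_orthonormal_basis n x w q ->
    kernel_diag qstar z0 <= kernel_diag q z0.
Proof.
move=> _ _ _ uni _ ellP ellx wstar ndstar w [_ w1] nd qstar q Bstar B.
have [wsp ->] := @kernel_formula R d n N x ell z0 wstar qstar uni ellP ellx ndstar Bstar.
have [wp ->] := @kernel_formula R d n N x ell z0 w q uni ellP ellx nd B.
rewrite /wstar in wsp *.
set a := fun i => `|(ell i).@[z0]|.
rewrite -/a in wsp *.
set S := \sum_(j < N) a j.
have aR : forall i, a i \is Num.real by move=> i; apply: normr_real.
have SR : S \is Num.real by apply: rpred_sum.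
have wR : forall i, w i \is Num.real by move=> i; apply: gtr0_real.
have LHS : \sum_(i < N) `|(ell i).@[z0]| ^+ 2 / (a i / S) = S * S.
  rewrite /S mulr_suml; apply: eq_bigr => i _.
  have := wsp i; rewrite lt_def => /andP[h _].
  move: h; rewrite mulf_eq0 negb_or invr_eq0 => /andP[an0 Sn0].
  rewrite /S /a /= in an0 Sn0 *.
  by field; rewrite an0 Sn0.
rewrite LHS -subr_ge0.
have E : \sum_(i < N) (a i - S * w i) ^+ 2 / w i =
         \sum_(i < N) `|(ell i).@[z0]| ^+ 2 / w i - S * S.
  rewrite (eq_bigr (fun i => a i ^+ 2 / w i - (S *+ 2 * a i - S ^+ 2 * w i)));
    last first.
    move=> i _; have wn0 : w i != 0 by rewrite gt_eqF.
    by field.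
  rewrite sumrB sumrB -!mulr_sumr w1 -/S; ring.
rewrite -E; apply: sumr_ge0 => i _; apply: divr_ge0; last exact: ltW.
by rewrite -realEsqr rpredB // rpredM.
Qed.
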